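(* Let $F(x)=\frac{1-x-\sqrt{1-2x-3x^2}}{2x^2}$ be the generating function of the Motzkin numbers. Then for all $n\in\mathbb{N}$: $D_{2,-1}(n)=1$ if $n\equiv0\pmod 4$, $0$ if $n\equiv1,3\pmod4$, $-1$ if $n\equiv2\pmod4$; $D_{2,-2}(n)=1$ if $n\equiv0,9,10,11\pmod{12}$, $0$ if $n\equiv1,2,7,8\pmod{12}$, $-1$ if $n\equiv3,4,5,6\pmod{12}$. Moreover, for $n\ge4$: $D_{2,-3}(n)=1$ if $n\equiv0,4\pmod{12}$; $0$ if $n\equiv2,8\pmod{12}$; $-1$ if $n\equiv6,10\pmod{12}$; and, writing $k=\lfloor n/12\rfloor$, $D_{2,-3}(12k+1)=8k$, $D_{2,-3}(12k+3)=-8k$, $D_{2,-3}(12k+5)=8k+2$, $D_{2,-3}(12k+7)=-8k-4$, $D_{2,-3}(12k+9)=8k+4$, $D_{2,-3}(12k+11)=-8k-6$.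
   Context: For a power series $F(x)=\sum_{n\ge0}a_nx^n$ and $K\ge1$, write $F(x)^K=\sum_{n\ge0}a_{K,n}x^n$ and set $a_{K,n}=0$ for $n<0$. For $M\in\mathbb{Z}$ and $K,N\in\mathbb{N}$ with $K\ge1$, define the shifted Hankel determinant $D_{K,M}(N)=\det(a_{K,i+j+M})_{i,j=0}^{N-1}$, with $D_{K,M}(0)=1$. $\mathbb{N}=\{0,1,2,\dots\}$. *)

(* Defs.v *)
From HB Require Import structures.
From mathcomp Require Import all_boot all_order all_algebra.
Set Implicit Arguments. Unset Strict Implicit. Unset Printing Implicit Defensive.
Import Order.TTheory GRing.Theory Num.Theory.

(* Motzkin numbers M_0, M_1, ... : the coefficients of
   F(x) = (1 - x - sqrt(1-2x-3x^2)) / (2x^2), characterized by the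
   functional equation F = 1 + x F + x^2 F^2, i.e.
   M_0 = 1,  M_{n+1} = M_n + \sum_{k=0}^{n-1} M_k M_{n-1-k}. *)
Definition motzkin_next (s : seq nat) : nat :=
  let n := (size s).-1 in
  nth 0 s n + \sum_(k < n) nth 0 s k * nth 0 s (n.-1 - k).

Fixpoint motzkin_seq (n : nat) : seq nat :=
  match n with
  | 0 => [:: 1]
  | m.+1 => let s := motzkin_seq m in rcons s (motzkin_next s)
  end.

Definition motzkin (n : nat) : nat := nth 0 (motzkin_seq n) n.

(* powcoef K n = a_{K,n}, the coefficient of x^n in F(x)^K *)
Fixpoint powcoef (K n : nat) : nat :=
  match K with
  | 0 => (n == 0)%N : nat
  | K'.+1 => \sum_(i < n.+1) motzkin i * powcoef K' (n - i)
  end.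

Definition acoef (K : nat) (m : int) : int :=
  match m with
  | Posz n => (powcoef K n)%:Z
  | Negz _ => 0
  end.

(* shifted Hankel determinant D_{K,M}(N) = det (a_{K,i+j+M})_{i,j=0}^{N-1};
   for N = 0 this is the determinant of the empty matrix, i.e. 1. *)
Definition hankelD (K : nat) (M : int) (N : nat) : int :=
  \det (\matrix_(i < N, j < N) acoef K ((i + j)%:Z + M)).

(* Main.v *)
Require Import Defs.
From HB Require Import structures.
From mathcomp Require Import all_boot all_order all_algebra.
From mathcomp Require Import zify ring lra.
Import Order.TTheory GRing.Theory Num.Theory.
Local Open Scope ring_scope.

Lemma motzkin_seq_size n : size (motzkin_seq n) = n.+1.
Proof. by elim: n => [|n IH] //=; rewrite size_rcons IH. Qed.

Lemma motzkin_seq_nth n k : (k <= n)%N -> nth 0%N (motzkin_seq n) k = motzkin k.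
Proof.
elim: n k => [|n IH] k hk.
  by move: hk; rewrite leqn0 => /eqP ->.
rewrite leq_eqVlt in hk; case/orP: hk => [/eqP ->|hk]; first by [].
rewrite /= nth_rcons motzkin_seq_size hk; exact: IH.
Qed.

Lemma motzkinS n : motzkin n.+1 =
  (motzkin n + \sum_(k < n) motzkin k * motzkin (n.-1 - k))%N.
Proof.
rewrite {1}/motzkin /= nth_rcons motzkin_seq_size ltnn eqxx /motzkin_next.
rewrite motzkin_seq_size /= motzkin_seq_nth //; congr (_ + _)%N.
apply: eq_bigr => k _; rewrite !motzkin_seq_nth //; last by apply/ltnW.
exact: leq_trans (leq_subr _ _) (leq_pred _).
Qed.

Definition Pm N : {poly int} := \poly_(i < N) (motzkin i)%:Z.

Lemma natb (b : bool) : ((nat_of_bool b)%:Z = b%:R :> int).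
Proof. by case: b. Qed.

Lemma Pm_pow N K n : (n < N)%N -> ((Pm N)^+K)`_n = (powcoef K n)%:Z.
Proof.
elim: K n => [|K IH] n hn.
  by rewrite expr0 coef1 /= natb.
rewrite exprS coefM /= -natz natr_sum; apply: eq_bigr => j _.
rewrite natrM natz coef_poly IH; last by apply: leq_ltn_trans (leq_subr _ _) hn.
rewrite (leq_ltn_trans _ hn) ?natz //; by rewrite -ltnS.
Qed.

Lemma Pm_eq N n : (n < N)%N ->
  (1 + 'X * Pm N + 'X^2 * (Pm N)^+2)`_n = (motzkin n)%:Z.
Proof.
move=> hn; rewrite !coefD coef1 coefXM coefXnM.
case: n hn => [|m] hn /=; first by rewrite !addr0.
rewrite add0r coef_poly (ltn_trans _ hn) // motzkinS PoszD.
congr (_ + _).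
case: m hn => [|m] hn /=; first by rewrite big_ord0.
rewrite subn2 /= expr2 coefM -natz natr_sum; apply: eq_bigr => j _.
rewrite natrM !natz !coef_poly.
have hj : (j < m.+1)%N by [].
have h1 : (j < N)%N by lia. have h2 : (m - j < N)%N by lia. by rewrite h1 h2.
Qed.

Lemma powcoef_rec K m : (powcoef K.+1 m.+1 =
  powcoef K m.+1 + powcoef K.+1 m + (if m is m'.+1 then powcoef K.+2 m' else 0))%N.
Proof.
apply/eqP; rewrite -(eqr_nat int) !natrD !natz; apply/eqP.
set N := m.+2; set P := Pm N.
have HQ : forall j, (j < N)%N ->
   ((P^+K * (1 + 'X * P + 'X^2 * P^+2))`_j = (P^+K * P)`_j).
  move=> j hj; rewrite !coefM; apply: eq_bigr => i _; congr (_ * _).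
  rewrite Pm_eq; last by apply: leq_ltn_trans (leq_subr _ _) hj.
  by rewrite /P coef_poly (leq_ltn_trans (leq_subr _ _) hj).
have E := HQ m.+1 (ltnSn _).
have Id : P^+K * (1 + 'X * P + 'X^2 * P^+2) =
   P^+K + 'X * P^+K.+1 + 'X^2 * P^+K.+2 by rewrite !exprS; ring.
rewrite Id -exprSr !coefD coefXM coefXnM in E. move: E. rewrite !(@Pm_pow N) //; last by rewrite /N; lia.
move=> <-; congr (_ + _ + _).
clear HQ Id P N. case: m => [|m] //. have -> : (m.+2 < 2)%N = false by []. by rewrite !subSS subn0.
Qed.

Definition Mz (n : nat) : int := (motzkin n)%:Z.

Lemma powcoef_0 K : powcoef K 0 = 1%N.
Proof. by elim: K => [|K IH] //=; rewrite big_ord1 IH. Qed.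

Lemma powcoef_1 n : powcoef 1 n = motzkin n.
Proof.
apply/eqP; rewrite -(eqr_nat int) !natz -(@Pm_pow n.+1) // expr1.
by rewrite coef_poly ltnSn.
Qed.

Lemma powcoef_2 m : (powcoef 2 m)%:Z = Mz m.+2 - Mz m.+1.
Proof.
have := powcoef_rec 0 m.+1; rewrite !powcoef_1 => h.
rewrite /Mz h; have -> : powcoef 0 m.+2 = 0%N by [].
by rewrite !PoszD; ring.
Qed.

Definition Lc (i k : nat) : int :=
  if (k <= i)%N then (powcoef k.+1 (i - k))%:Z else 0.

Lemma Lc_diag i : Lc i i = 1.
Proof. by rewrite /Lc leqnn subnn powcoef_0. Qed.

Lemma Lc_gt i k : (i < k)%N -> Lc i k = 0.
Proof. by rewrite /Lc ltnNge => /negbTE ->. Qed.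

Lemma Lc_0 i : Lc i 0 = Mz i.
Proof. by rewrite /Lc leq0n subn0 powcoef_1. Qed.

Definition uop (x : nat -> int) (k : nat) : int :=
  (if k is k'.+1 then x k' else 0) + x k + x k.+1.

Lemma Lc_rec i k : Lc i.+1 k = uop (Lc i) k.
Proof.
rewrite /uop; case: (leqP k i) => hk.
  have -> : Lc i.+1 k = (powcoef k.+1 (i - k).+1)%:Z.
    by rewrite /Lc (leq_trans hk) // subSn.
  rewrite powcoef_rec !PoszD /Lc hk; congr (_ + _ + _).
    case: k hk => [|k] hk /=; first by [].
    by rewrite (ltnW hk) subnS prednK // subn_gt0.
  case: (leqP k.+1 i) => h2.
    by have -> : (i - k = (i - k.+1).+1)%N by lia.
  by have -> : (i - k = 0)%N by lia.
rewrite leq_eqVlt in hk; case/orP: hk => [/eqP <-|hk].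
  by rewrite Lc_diag; case: i => [|i] /=; rewrite Lc_diag !Lc_gt // ?add0r ?addr0.
rewrite !Lc_gt //; try lia.
by case: k hk => [|k] hk //=; rewrite Lc_gt ?addr0 //; lia.
Qed.

Definition Sfun (i : nat) (x : nat -> int) : int := \sum_(k < i.+1) Lc i k * x k.

Lemma S_big i n (x : nat -> int) : (i < n)%N -> \sum_(k < n) Lc i k * x k = Sfun i x.
Proof.
move=> hn; rewrite /Sfun -(big_mkord xpredT (fun k => Lc i k * x k)).
rewrite -(big_mkord xpredT (fun k => Lc i k * x k)).
rewrite (@big_cat_nat _ _ _ i.+1) //= [X in _ + X]big1_seq ?addr0 //.
move=> k /andP[_]; rewrite mem_index_iota => /andP[h1 _].
by rewrite Lc_gt ?mul0r.
Qed.

Lemma S_ext i (x y : nat -> int) : (forall k, x k = y k) -> Sfun i x = Sfun i y.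
Proof. by move=> h; apply: eq_bigr => k _; rewrite h. Qed.

Lemma S_rec i (x : nat -> int) : Sfun i.+1 x = Sfun i (uop x).
Proof.
rewrite -(@S_big i i.+2) // /Sfun.
under eq_bigr do rewrite Lc_rec /uop !mulrDl.
under [in RHS]eq_bigr do rewrite !mulrDr.
rewrite !big_split /=.
have hA : \sum_(k < i.+2) (if (k:nat) is k'.+1 then Lc i k' else 0) * x k =
          \sum_(k < i.+2) Lc i k * x k.+1.
  rewrite big_ord_recl /=. rewrite (mul0r (x _)) add0r [RHS]big_ord_recr /=. rewrite Lc_gt //. rewrite (mul0r (x _)) addr0.
  by apply: eq_bigr.
have hC : \sum_(k < i.+2) Lc i k.+1 * x k =
          \sum_(k < i.+2) Lc i k * (if (k:nat) is k'.+1 then x k' else 0).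
  rewrite [LHS]big_ord_recr /=. rewrite (@Lc_gt i i.+2) //. rewrite (mul0r (x _)) addr0.
  rewrite [RHS]big_ord_recl /=. rewrite (mulr0 (Lc _ _)) add0r; by apply: eq_bigr.
rewrite hA hC; ring.
Qed.

Lemma S_delta i p : Sfun i (fun k => (k == p)%:R) = Lc i p.
Proof.
rewrite -(@S_big i (i + p).+1); last by lia.
have hp : (p < (i + p).+1)%N by lia.
rewrite (bigD1 (Ordinal hp)) //= eqxx mulr1 big1 ?addr0 // => k hk.
by rewrite -val_eqE /= in hk; rewrite (negbTE hk) mulr0.
Qed.

Lemma S_L i j : Sfun i (Lc j) = Mz (i + j).
Proof.
elim: i j => [|i IH] j.
  by rewrite /Sfun big_ord1 Lc_diag mul1r Lc_0.
rewrite S_rec (@S_ext _ _ (Lc j.+1)); last by move=> k; rewrite Lc_rec. by rewrite IH addnS.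
Qed.

Definition w2 (k : nat) : int :=
  if k == 0%N then 0 else if (k %% 3 == 0)%N then -1
  else if (k %% 3 == 1)%N then 0 else 1.
Definition w3 (k : nat) : int := (k %/ 3)%:Z * (if (k %% 3 == 1)%N then -2 else 1).

Lemma uop_w2 k : uop w2 k = (k == 1%N)%:R.
Proof.
rewrite /uop /w2; case: k => [|k] /=; first by [].
case: k => [|k] /=; first by [].
repeat case: ifP => ?; lia.
Qed.

Lemma uop_w3 k : uop w3 k = w2 k.
Proof.
rewrite /uop /w3 /w2; case: k => [|k] /=; first by [].
repeat case: ifP => ?; lia.
Qed.

Lemma S_w2 i : Sfun i w2 = if (2 <= i)%N then (powcoef 2 (i - 2))%:Z else 0.
Proof.
case: i => [|i]; first by rewrite /Sfun big_ord1 /w2 /w3 /= mulr0.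
rewrite S_rec (@S_ext _ _ (fun k => (k == 1%N)%:R)); last exact: uop_w2.
rewrite S_delta /Lc; case: i => [|i] //=.
Qed.

Lemma S_w3 i : Sfun i w3 = if (3 <= i)%N then (powcoef 2 (i - 3))%:Z else 0.
Proof.
case: i => [|i]; first by rewrite /Sfun big_ord1 /w2 /w3 /= mulr0.
rewrite S_rec (@S_ext _ _ w2); last exact: uop_w3.
by rewrite S_w2.
Qed.

Lemma S_sub i (x y : nat -> int) : Sfun i (fun k => x k - y k) = Sfun i x - Sfun i y.
Proof. by rewrite /Sfun -sumrB; apply: eq_bigr => k _; rewrite mulrBr. Qed.

Lemma S_dL i m : Sfun i (fun k => uop (Lc m) k - Lc m k) = Mz (i + m).+1 - Mz (i + m).
Proof.
rewrite S_sub -S_rec !S_L; by [].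
Qed.

Lemma acoefM (t s : nat) (z : int) : (0 < s)%N -> z = t%:Z - s%:Z ->
  acoef 2 z = if (s <= t.+1)%N then Mz (t.+2 - s) - Mz (t.+1 - s) else 0.
Proof.
move=> hs ->; case: (leqP s t) => h.
  have -> : t%:Z - s%:Z = (t - s)%N%:Z by rewrite subzn.
  rewrite /= powcoef_2 ifT; last by lia.
  have -> : (t.+2 - s = (t - s).+2)%N by lia.
  by have -> : (t.+1 - s = (t - s).+1)%N by lia.
have -> : t%:Z - s%:Z = Negz (s - t).-1 by rewrite NegzE; lia.
rewrite /=; case: ifP => h2 //.
have -> : (t.+2 - s = 1)%N by lia. have -> : (t.+1 - s = 0)%N by lia.
by rewrite /Mz motzkinS big_ord0 addn0 subrr.
Qed.

Definition Df (f : nat -> nat -> int) (n : nat) : int :=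
  \det (\matrix_(i < n, j < n) f i j).

Definition Nm (k l : nat) : int := (k == l.+1)%:R + (l == k.+1)%:R.

Lemma sum_pick n p (f : nat -> int) :
  \sum_(l < n) (l == p :> nat)%:R * f l = if (p < n)%N then f p else 0.
Proof.
case: ifP => hp.
  rewrite (bigD1 (Ordinal hp)) //= eqxx mul1r big1 ?addr0 // => k hk.
  by rewrite -val_eqE /= in hk; rewrite (negbTE hk) mul0r.
rewrite big1 // => k _; case: eqP => h; last by rewrite mul0r.
by move: (ltn_ord k); rewrite h hp.
Qed.

Lemma NL n j k : (j < n)%N ->
  \sum_(l < n) Nm k l * Lc j l = uop (Lc j) k - Lc j k.
Proof.
move=> hj; rewrite /Nm /uop.
under eq_bigr do rewrite mulrDl.
rewrite big_split /=.
have -> : \sum_(i < n) (i == k.+1 :> nat)%:R * Lc j i = Lc j k.+1.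
  rewrite sum_pick; case: ifP => // h; rewrite Lc_gt //; lia.
case: k => [|k].
  rewrite big1 ?add0r; first by ring.
  by move=> l _; rewrite mul0r.
rewrite (eq_bigr (fun l : 'I_n => (l == k :> nat)%:R * Lc j l)); last first.
  by move=> l _; rewrite eqSS eq_sym.
rewrite sum_pick; case: ifP => h; first by ring.
rewrite (@Lc_gt j k); [ring | lia].
Qed.

Definition Bf (p : nat) (W : nat -> nat -> int) (k l : nat) : int :=
  if (l < p)%N then W l k else Nm k (l - p).
Definition Cf (p : nat) (l j : nat) : int :=
  if (l < p)%N || (j < p)%N then (l == j)%:R else Lc (j - p) (l - p).
Definition Yf (p : nat) (W : nat -> nat -> int) (j k : nat) : int :=
  if (j < p)%N then W j k else uop (Lc (j - p)) k - Lc (j - p) k.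

Lemma BC n p W (k j : 'I_n) :
  (\matrix_(a < n, b < n) Bf p W a b *m \matrix_(a < n, b < n) Cf p a b) k j
  = Yf p W j k.
Proof.
rewrite !mxE /Yf; case: ifP => hj.
  under eq_bigr do rewrite !mxE /Cf hj orbT.
  under eq_bigr do rewrite mulrC.
  by rewrite sum_pick ltn_ord /Bf hj.
have hjp : (p <= j)%N by rewrite leqNgt hj.
under eq_bigr do rewrite !mxE.
rewrite -(big_mkord xpredT (fun l => Bf p W k l * Cf p l j)).
have hpn : (p <= n)%N by apply: leq_trans hjp (ltnW (ltn_ord j)).
rewrite (@big_cat_nat _ _ _ p) //= big1_seq ?add0r; last first.
  move=> l /andP[_]; rewrite mem_index_iota => /andP[_ hl].
  rewrite /Cf hl /=; case: eqP => h; last by rewrite mulr0.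
  by move: hl; rewrite h hj.
rewrite -{1}(add0n p) big_addn big_mkord.
rewrite -(@NL (n - p) (j - p) k); last by have := ltn_ord j; lia.
apply: eq_bigr => l _.
rewrite /Bf /Cf hj (_ : (l + p < p)%N = false) /=; last by lia.
by rewrite addnK.
Qed.

Lemma acoef_dL (t : nat) (z : int) : z = t%:Z - 1 -> acoef 2 z = Mz t.+1 - Mz t.
Proof.
move=> ->; case: t => [|t].
  by rewrite /Mz motzkinS big_ord0 addn0 subrr.
have -> : t.+1%:Z - 1 = t%:Z by lia.
by rewrite /= powcoef_2.
Qed.

Lemma acoefP (t s : nat) (z : int) : z = t%:Z - s%:Z ->
  acoef 2 z = if (s <= t)%N then (powcoef 2 (t - s))%:Z else 0.
Proof.
move=> ->; case: (leqP s t) => h.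
  by have -> : t%:Z - s%:Z = (t - s)%N%:Z by rewrite subzn.
by have -> : t%:Z - s%:Z = Negz (s - t).-1 by rewrite NegzE; lia.
Qed.

Lemma hankel_gen p (W : nat -> nat -> int) n :
  (forall i j, (j < p)%N -> acoef 2 ((i + j)%:Z - (p.+1)%:Z) = Sfun i (W j)) ->
  hankelD 2 (- (p.+1)%:Z) n = Df (Bf p W) n.
Proof.
move=> HW.
set Lmx := \matrix_(i < n, k < n) Lc i k.
set Bm := \matrix_(a < n, b < n) Bf p W a b.
set Cm := \matrix_(a < n, b < n) Cf p a b.
have E : \matrix_(i < n, j < n) acoef 2 ((i + j)%:Z + - (p.+1)%:Z) = Lmx *m (Bm *m Cm).
  apply/matrixP => i j; rewrite !mxE.
  under [RHS]eq_bigr do rewrite mxE BC.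
  rewrite (@S_big i n (Yf p W j)) //.
  case: (ltnP j p) => hj.
    by rewrite (@S_ext _ _ (W j)); [exact: HW | move=> k; rewrite /Yf hj].
  rewrite (@S_ext _ _ (fun k => uop (Lc (j-p)) k - Lc (j-p) k)); last first.
    by move=> k; rewrite /Yf ltnNge hj.
  rewrite S_dL; apply: acoef_dL; lia.
rewrite /hankelD /Df E !det_mulmx.
have -> : \det Lmx = 1.
  rewrite det_trig; last first.
    apply/forallP => i; apply/forallP => j; apply/implyP => hij.
    by rewrite mxE Lc_gt.
  by rewrite big1 // => i _; rewrite mxE Lc_diag.
have -> : \det Cm = 1.
  rewrite -det_tr det_trig; last first.
    apply/forallP => i; apply/forallP => j; apply/implyP => hij.
    rewrite !mxE /Cf; case: ifP => h.
      by rewrite (gtn_eqF hij).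
    rewrite Lc_gt //; move: h hij; lia.
  rewrite big1 // => i _; rewrite !mxE /Cf eqxx; case: ifP => //.
  by rewrite Lc_diag.
by rewrite mul1r mulr1.
Qed.

Definition W0 (j k : nat) : int := 0.
Definition W1 (j k : nat) : int := w2 k.
Definition W2 (j k : nat) : int := if j == 0%N then w3 k else w2 k.

Lemma hankel1 n : hankelD 2 (-1) n = Df (Bf 0 W0) n.
Proof. by apply: (@hankel_gen 0 W0 n). Qed.

Lemma hankel2 n : hankelD 2 (-2) n = Df (Bf 1 W1) n.
Proof.
apply: (@hankel_gen 1 W1 n) => i j; rewrite ltnS leqn0 => /eqP ->.
rewrite /W1 S_w2; apply: acoefP; lia.
Qed.

Lemma hankel3 n : hankelD 2 (-3) n = Df (Bf 2 W2) n.
Proof.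
apply: (@hankel_gen 2 W2 n) => i j hj; rewrite /W2.
case: j hj => [|[|j]] // _ /=.
  rewrite S_w3; apply: acoefP; lia.
rewrite S_w2; apply: acoefP; lia.
Qed.

Lemma Df_ext (f g : nat -> nat -> int) n :
  (forall i j, (i < n)%N -> (j < n)%N -> f i j = g i j) -> Df f n = Df g n.
Proof.
move=> h; rewrite /Df; congr (\det _); apply/matrixP => i j; rewrite !mxE.
exact: h.
Qed.

Lemma Df_tr (f : nat -> nat -> int) n : Df f n = Df (fun i j => f j i) n.
Proof.
rewrite /Df -det_tr; congr (\det _); apply/matrixP => i j; by rewrite !mxE.
Qed.

Lemma Df_col (f : nat -> nat -> int) n r c : (r <= n)%N -> (c <= n)%N ->
  (forall i, (i <= n)%N -> i != r -> f i c = 0) ->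
  Df f n.+1 = f r c * (-1) ^+ (r + c) * Df (fun a b => f (bump r a) (bump c b)) n.
Proof.
move=> hr hc h0; rewrite /Df (expand_det_col _ (Ordinal (hc : (c < n.+1)%N))).
rewrite (bigD1 (Ordinal (hr : (r < n.+1)%N))) //= big1 ?addr0.
  rewrite mxE /cofactor /= mulrA; congr (_ * \det _).
  by apply/matrixP => a b; rewrite !mxE.
move=> i hi; rewrite mxE h0 ?mul0r //; first by rewrite -ltnS.
Qed.

Lemma Df_row (f : nat -> nat -> int) n r c : (r <= n)%N -> (c <= n)%N ->
  (forall j, (j <= n)%N -> j != c -> f r j = 0) ->
  Df f n.+1 = f r c * (-1) ^+ (r + c) * Df (fun a b => f (bump r a) (bump c b)) n.
Proof.
move=> hr hc h0; rewrite Df_tr (@Df_col _ n c r) // addnC; congr (_ * _).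
by rewrite Df_tr.
Qed.

Lemma bump_neq h i : bump h i != h.
Proof. rewrite /bump; case: (leqP h i) => h1 /=; apply/eqP; lia. Qed.

Lemma Df_colop (f : nat -> nat -> int) n j0 k (c : int) :
  (j0 < n)%N -> (k < n)%N -> j0 != k ->
  Df f n = Df (fun i j => if j == j0 then f i j0 + c * f i k else f i j) n.
Proof.
move=> hj hk hjk; rewrite [LHS]Df_tr [RHS]Df_tr /Df.
set A := \matrix_(i < n, j < n) (if (i == j0 :> nat) then f j j0 + c * f j k else f j i).
set B := \matrix_(i < n, j < n) f j i.
set C := \matrix_(i < n, j < n) (if (i == j0 :> nat) then f j k else f j i).
have -> : \det A = 1 * \det B + c * \det C.
  apply: (@determinant_multilinear _ _ A B C (Ordinal hj)).
  - apply/matrixP => i j; rewrite !mxE /= eqxx; by rewrite mul1r.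
  - apply/matrixP => i j; rewrite !mxE /=.
    by rewrite (negbTE (bump_neq _ _)).
  - apply/matrixP => i j; rewrite !mxE /=.
    by rewrite (negbTE (bump_neq _ _)).
have -> : \det C = 0.
  apply: (@determinant_alternate _ _ C (Ordinal hj) (Ordinal hk)) => // j.
  rewrite !mxE /= eqxx; by rewrite eq_sym (negbTE hjk).
by rewrite mul1r mulr0 addr0.
Qed.

Lemma Df_1 (f : nat -> nat -> int) : Df f 1 = f 0%N 0%N.
Proof.
rewrite (@Df_col f 0 0 0) // => [|i]; last by rewrite leqn0 => /eqP ->.
by rewrite /Df det_mx00 !mulr1.
Qed.

Lemma Df_2 (f : nat -> nat -> int) : Df f 2 = f 0%N 0%N * f 1%N 1%N - f 0%N 1%N * f 1%N 0%N.
Proof.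
rewrite /Df (expand_det_col _ ord0) big_ord_recl big_ord1 /cofactor !mxE /=.
rewrite !det_mx11 !mxE /=.
rewrite expr0 expr1; ring.
Qed.

Definition sg (m : nat) (x : int) : int :=
  if (m %% 4 == 0)%N then x else if (m %% 4 == 2)%N then - x else 0.

Ltac crush := repeat (first [ progress (rewrite ?eqxx /=) | match goal with |- context [if ?b then _ else _] => let h := fresh "h" in case h : b end ]); try lia.
Fixpoint alt (w : nat -> int) (m : nat) : int :=
  if m is m'.+1 then alt w m' + sg m' (w m') else 0.

Lemma alt_ext w v m : (forall a, (a < m)%N -> w a = v a) -> alt w m = alt v m.
Proof.
elim: m => [|m IH] h //=; rewrite IH ?h // => a ha; apply: h; exact: ltnW.
Qed.

Lemma sg_sub m x y : sg m (x - y) = sg m x - sg m y.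
Proof. rewrite /sg; crush. Qed.

Lemma sg_SS m x : sg m.+2 x = - sg m x.
Proof. rewrite /sg; crush. Qed.

Definition upd (w : nat -> int) (N : nat) (a : nat) : int :=
  w a - (if a.+2 == N then w N else 0).

Lemma alt_step w N : (0 < N)%N -> alt (upd w N) N = alt w N.+1.
Proof.
case: N => [|[|k]] // _.
  rewrite /= /upd /= subr0 /sg; crush.
rewrite /= (@alt_ext (upd w k.+2) w k); last first.
  move=> a ha; rewrite /upd; have /negbTE -> : a.+2 != k.+2 by apply/eqP; lia.
  by rewrite subr0.
rewrite /upd eqxx; have /negbTE -> : k.+3 != k.+2 by apply/eqP; lia.
rewrite subr0 sg_sub sg_SS; ring.
Qed.

Definition E1 (w : nat -> int) (k l : nat) : int :=
  if l == 0%N then w k else Nm k l.-1.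

Lemma Nm_if k l : Nm k l = (if k == l.+1 then 1 else 0) + (if l == k.+1 then 1 else 0).
Proof. by rewrite /Nm; case: eqP; case: eqP. Qed.

Lemma sign2 n : (-1) ^+ (n + n) = 1 :> int.
Proof. by rewrite addnn -mul2n exprM sqrrN expr1n. Qed.

Lemma sign21 n : (-1) ^+ (n + n.+1) = -1 :> int.
Proof. by rewrite addnS exprS sign2 mulr1. Qed.

Lemma E_rec w n : (0 < n)%N -> Df (E1 w) n.+1 = Df (E1 (upd w n)) n.
Proof.
move=> hn.
rewrite (@Df_colop (E1 w) n.+1 0 n (- w n)) //; last by rewrite eq_sym -lt0n.
rewrite (@Df_row _ n n n) //.
  rewrite sign2 [X in X * _ * _](_ : _ = 1); last by rewrite /E1 !Nm_if; crush.
  rewrite !mul1r; apply: Df_ext => a b ha hb.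
  have -> : bump n a = a by rewrite /bump; lia.
  have -> : bump n b = b by rewrite /bump; lia.
  rewrite /E1 /upd !Nm_if /=; crush.
move=> j hj hjn; rewrite /E1 !Nm_if; crush.
Qed.

Lemma E_closed w n : Df (E1 w) n.+1 = alt w n.+1.
Proof.
elim: n w => [|n IH] w.
  rewrite Df_1 /E1 /= /sg; crush.
rewrite E_rec // IH alt_step //.
Qed.

Definition Hf (a b : nat -> int) (c d : int) (m i j : nat) : int :=
  if i == m then (if j == 0%N then c else if j == 1%N then d else 0)
  else if j == 0%N then a i else if j == 1%N then b i else Nm i (j - 2).

Lemma H_rec a b c d m : (0 < m)%N ->
  Df (Hf a b c d m.+1) m.+2 = - Df (Hf (upd a m) (upd b m) c d m) m.+1.
Proof.
move=> hm.
rewrite (@Df_colop _ m.+2 0 m.+1 (- a m)) //.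
rewrite (@Df_colop _ m.+2 1 m.+1 (- b m)) //; last by apply/eqP; lia.
rewrite (@Df_row _ m.+1 m m.+1) //.
  rewrite sign21 [X in X * _ * _](_ : _ = 1); last by rewrite /Hf !Nm_if; crush.
  rewrite mul1r mulN1r; congr (- _); apply: Df_ext => i j hi hj.
  have -> : bump m.+1 j = j by rewrite /bump; lia.
  have [->|him] := eqVneq i m.
    have -> : bump m m = m.+1 by rewrite /bump; lia.
    rewrite /Hf /upd !Nm_if; crush.
  have -> : bump m i = i by rewrite /bump; lia.
  rewrite /Hf /upd !Nm_if; crush.
move=> j hj hjn; rewrite /Hf !Nm_if; crush.
Qed.

Lemma H_closed a b c d m :
  Df (Hf a b c d m.+1) m.+2 = (-1) ^+ m * (alt a m.+1 * d - alt b m.+1 * c).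
Proof.
elim: m a b => [|m IH] a b.
  rewrite Df_2 /Hf /= expr0 mul1r /sg; crush.
rewrite H_rec // IH !alt_step // exprS; ring.
Qed.

Lemma Nm_rec m : Df Nm m.+2 = - Df Nm m.
Proof.
rewrite (@Df_col _ m.+1 m m.+1) //; last by move=> i hi him; rewrite !Nm_if; crush.
rewrite sign21 [X in X * _ * _](_ : _ = 1); last by rewrite !Nm_if; crush.
rewrite mul1r mulN1r; congr (- _).
rewrite (@Df_row _ m m m) //; last by move=> j hj hjm; rewrite !Nm_if /bump; crush.
rewrite sign2 [X in X * _ * _](_ : _ = 1); last by rewrite !Nm_if /bump; crush.
rewrite !mul1r; apply: Df_ext => i j hi hj; rewrite !Nm_if /bump; crush.
Qed.

Lemma D1_eq n : hankelD 2 (-1) n = Df Nm n.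
Proof.
rewrite hankel1; apply: Df_ext => i j _ _; by rewrite /Bf subn0.
Qed.

Lemma D2_eq n : hankelD 2 (-2) n.+1 = alt w2 n.+1.
Proof.
rewrite hankel2 -E_closed; apply: Df_ext => i j _ _.
rewrite /Bf /E1 /W1; case: j => [|j] //=; by rewrite subSS subn0.
Qed.

Lemma D3_eq m : hankelD 2 (-3) m.+2 =
  (-1) ^+ m * (alt w3 m.+1 * w2 m.+1 - alt w2 m.+1 * w3 m.+1).
Proof.
rewrite hankel3 -H_closed; apply: Df_ext => i j hi hj.
rewrite /Bf /Hf /W2; case: (i =P m.+1) => [->|hne].
  case: j hj => [|[|j]] hj //=; rewrite Nm_if; crush.
case: j hj => [|[|j]] hj //=.
Qed.


Definition Y (m : nat) : int :=
  if (m %% 12 < 2)%N then 0 else if (m %% 12 < 6)%N then -1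
  else if (m %% 12 < 8)%N then 0 else 1.

Lemma A2_closed m : alt w2 m.+1 = Y m.
Proof.
elim: m => [|m IH]; first by rewrite /= /sg /w2 /Y; crush.
have -> : alt w2 m.+2 = alt w2 m.+1 + sg m.+1 (w2 m.+1) by [].
rewrite IH /Y /sg /w2; crush.
Qed.

Definition Zc (m : nat) : int :=
  let q := (m %/ 12)%:Z in
  if (m %% 12 < 2)%N then 8 * q else if (m %% 12 < 4)%N then 4 * q
  else if (m %% 12 < 6)%N then - (4 * q) - 2 else if (m %% 12 < 8)%N then - (8 * q) - 4
  else if (m %% 12 < 10)%N then - (4 * q) - 2 else 4 * q + 4.

Lemma A3_closed m : alt w3 m.+1 = Zc m.
Proof.
elim: m => [|m IH]; first by rewrite /= /sg /w3 /Zc; crush.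
have -> : alt w3 m.+2 = alt w3 m.+1 + sg m.+1 (w3 m.+1) by [].
rewrite IH /Zc /sg /w3; crush.
Qed.

Lemma signE m : (-1) ^+ m = if (m %% 2 == 0)%N then 1 else -1 :> int.
Proof. by rewrite -signr_odd modn2; case: (odd m). Qed.

Lemma D1_val n : Df Nm n = if (n %% 4 == 0)%N then 1 else if (n %% 4 == 2)%N then -1 else 0.
Proof.
suff : Df Nm n = (if (n %% 4 == 0)%N then 1 else if (n %% 4 == 2)%N then -1 else 0) /\
       Df Nm n.+1 = (if (n.+1 %% 4 == 0)%N then 1 else if (n.+1 %% 4 == 2)%N then -1 else 0) by case.
elim: n => [|n [IH1 IH2]].
  by split; [rewrite /Df det_mx00 | rewrite Df_1 /Nm].
split=> //; rewrite Nm_rec IH1; crush.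
Qed.

Theorem proposition4p3 :
  (forall n : nat,
     ((n %% 4 = 0)%N -> hankelD 2 (-1) n = 1) /\
     ((n %% 4 = 1)%N \/ (n %% 4 = 3)%N -> hankelD 2 (-1) n = 0) /\
     ((n %% 4 = 2)%N -> hankelD 2 (-1) n = -1)) /\
  (forall n : nat,
     ((n %% 12 = 0)%N \/ (n %% 12 = 9)%N \/ (n %% 12 = 10)%N \/ (n %% 12 = 11)%N ->
        hankelD 2 (-2) n = 1) /\
     ((n %% 12 = 1)%N \/ (n %% 12 = 2)%N \/ (n %% 12 = 7)%N \/ (n %% 12 = 8)%N ->
        hankelD 2 (-2) n = 0) /\
     ((n %% 12 = 3)%N \/ (n %% 12 = 4)%N \/ (n %% 12 = 5)%N \/ (n %% 12 = 6)%N ->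
        hankelD 2 (-2) n = -1)) /\
  (forall n : nat, (4 <= n)%N ->
     let k : int := (n %/ 12)%:Z in
     ((n %% 12 = 0)%N \/ (n %% 12 = 4)%N -> hankelD 2 (-3) n = 1) /\
     ((n %% 12 = 2)%N \/ (n %% 12 = 8)%N -> hankelD 2 (-3) n = 0) /\
     ((n %% 12 = 6)%N \/ (n %% 12 = 10)%N -> hankelD 2 (-3) n = -1) /\
     ((n %% 12 = 1)%N -> hankelD 2 (-3) n = 8 * k) /\
     ((n %% 12 = 3)%N -> hankelD 2 (-3) n = - (8 * k)) /\
     ((n %% 12 = 5)%N -> hankelD 2 (-3) n = 8 * k + 2) /\
     ((n %% 12 = 7)%N -> hankelD 2 (-3) n = - (8 * k) - 4) /\
     ((n %% 12 = 9)%N -> hankelD 2 (-3) n = 8 * k + 4) /\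
     ((n %% 12 = 11)%N -> hankelD 2 (-3) n = - (8 * k) - 6)).
Proof.
split; [|split].
- move=> n; rewrite D1_eq D1_val; split; [|split] => h; crush.
- case=> [|m].
    by split; [|split] => h; rewrite /hankelD det_mx00 //; lia.
  rewrite D2_eq A2_closed /Y; split; [|split] => h; crush.
- case=> [|[|m]] hn //; move=> k; rewrite {}/k.
  rewrite D3_eq A3_closed A2_closed signE /Zc /Y /w2 /w3.
  by repeat split => h; crush.
Qed.
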